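(* Let $A$ be a ring and $|\cdot|:A\to R$ a generalized seminorm that has tiny balls. Then the ball neighborhood topology for $|\cdot|$ exists (there is a unique topology on $A$ compatible with addition in which, for every $x\in A$, the non-empty open balls $B(x,|a|)$, $a\in A$, $|a|>0$, form a fundamental system of neighborhoods of $x$), and it makes $A$ a topological ring.
   Context: A halo is a commutative unital semiring with a partial order compatible with $+$ and $\cdot$; an aura is a halo whose semiring is a semifield; positive means $0<1$. A generalized seminorm is a map $|\cdot|:A\to R$ into a positive totally ordered aura with $|0|=0,|1|=1$, $|a+b|\le|a|+|b|$, $|ab|\le|a||b|$. For $x,a\in A$ with $|a|>0$, the open ball is $B(x,|a|)=\{z\in A:|z-x|<|a|\}$. $|\cdot|$ has tiny balls if: (1) for all $a$ with $|a|>0$ there is $a'$ with $|a'|>0$ and $B(0,|a'|)+B(0,|a'|)\subset B(0,|a|)$; (2) for all $a$ with $|a|>0$ and all $x\in A$ there is $c$ with $|c|>0$ and $x\cdot B(0,|c|)\subset B(0,|a|)$; (3) for all $a$ with $|a|>0$ there is $a'$ with $|a'|>0$ and $B(0,|a'|)\cdot B(0,|a'|)\subset B(0,|a|)$; (4) for all $a$ with $|a|>0$ there is $a'$ with $|a'|>0$ and $-B(0,|a'|)\subset B(0,|a|)$. *)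

(* Defs.v *)
From mathcomp Require Import all_boot all_order all_algebra.
Set Implicit Arguments. Unset Strict Implicit. Unset Printing Implicit Defensive.
Import GRing.Theory.
Local Open Scope ring_scope.

Definition lt_of (R : Type) (le : R -> R -> Prop) (x y : R) : Prop :=
  le x y /\ x <> y.

Definition is_halo_order (R : comNzSemiRingType) (le : R -> R -> Prop) : Prop :=
  [/\ (forall x, le x x),
      (forall x y, le x y -> le y x -> x = y),
      (forall x y z, le x y -> le y z -> le x z),
      (forall x y z, le x y -> le (x + z) (y + z)) &
      (forall x y z, le x y -> le (x * z) (y * z))].

Definition is_semifield (R : comNzSemiRingType) : Prop :=
  forall x : R, x <> 0 -> exists y : R, x * y = 1.

Definition is_pos_total_aura (R : comNzSemiRingType) (le : R -> R -> Prop) : Prop :=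
  [/\ is_halo_order le, is_semifield R,
      (forall x y : R, le x y \/ le y x) &
      lt_of le 0 1].

Definition is_gen_seminorm (A : comNzRingType) (R : comNzSemiRingType)
    (le : R -> R -> Prop) (nrm : A -> R) : Prop :=
  [/\ nrm 0 = 0, nrm 1 = 1,
      (forall a b, le (nrm (a + b)) (nrm a + nrm b)) &
      (forall a b, le (nrm (a * b)) (nrm a * nrm b))].

Definition ball_of (A : comNzRingType) (R : comNzSemiRingType)
    (le : R -> R -> Prop) (nrm : A -> R) (x a : A) : A -> Prop :=
  fun z => lt_of le (nrm (z - x)) (nrm a).

Definition has_tiny_balls (A : comNzRingType) (R : comNzSemiRingType)
    (le : R -> R -> Prop) (nrm : A -> R) : Prop :=
  let pos a := lt_of le 0 (nrm a) in
  let B := ball_of le nrm 0 in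
  [/\ (forall a, pos a -> exists a', pos a' /\
          forall z w, B a' z -> B a' w -> B a (z + w)),
      (forall a, pos a -> forall x, exists c, pos c /\
          forall z, B c z -> B a (x * z)),
      (forall a, pos a -> exists a', pos a' /\
          forall z w, B a' z -> B a' w -> B a (z * w)) &
      (forall a, pos a -> exists a', pos a' /\
          forall z, B a' z -> B a (- z))].

Definition is_topology (T : Type) (O : (T -> Prop) -> Prop) : Prop :=
  [/\ O (fun _ => True),
      (forall U V, O U -> O V -> O (fun x => U x /\ V x)) &
      (forall F : (T -> Prop) -> Prop, (forall U, F U -> O U) ->
          O (fun x => exists U, F U /\ U x))].

Definition is_nbhd (T : Type) (O : (T -> Prop) -> Prop) (x : T) (N : T -> Prop) :=
  exists U, [/\ O U, U x & forall y, U y -> N y].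

Definition fundamental_system (T : Type) (O : (T -> Prop) -> Prop) (x : T)
    (Fam : (T -> Prop) -> Prop) : Prop :=
  (forall N, Fam N -> is_nbhd O x N) /\
  (forall N, is_nbhd O x N -> exists M, Fam M /\ forall y, M y -> N y).

Definition balls_fundamental (A : comNzRingType) (R : comNzSemiRingType)
    (le : R -> R -> Prop) (nrm : A -> R) (O : (A -> Prop) -> Prop) : Prop :=
  forall x : A, fundamental_system O x
    (fun N => exists a, lt_of le 0 (nrm a) /\ N = ball_of le nrm x a).

Definition continuous2 (T : Type) (O : (T -> Prop) -> Prop) (f : T -> T -> T) :=
  forall x y W, is_nbhd O (f x y) W ->
    exists U V, [/\ is_nbhd O x U, is_nbhd O y V &
                    forall u v, U u -> V v -> W (f u v)].

Definition continuous1 (T : Type) (O : (T -> Prop) -> Prop) (f : T -> T) :=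
  forall x W, is_nbhd O (f x) W ->
    exists U, is_nbhd O x U /\ forall u, U u -> W (f u).

Definition is_topological_ring (A : comNzRingType) (O : (A -> Prop) -> Prop) : Prop :=
  [/\ is_topology O, continuous2 O (fun x y => x + y),
      continuous1 O (fun x => - x) & continuous2 O (fun x y => x * y)].

(* Main.v *)
Require Import Defs.
From mathcomp Require Import all_boot all_order all_algebra.
From mathcomp Require Import ring.
From Stdlib Require Import FunctionalExtensionality PropExtensionality.
Import GRing.Theory.
Local Open Scope ring_scope.

Theorem proposition4p5 (A : comNzRingType) (R : comNzSemiRingType)
    (le : R -> R -> Prop) (nrm : A -> R) :
  is_pos_total_aura le ->
  is_gen_seminorm le nrm ->
  has_tiny_balls le nrm ->
  exists O : (A -> Prop) -> Prop,
    [/\ is_topology O,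
        balls_fundamental le nrm O,
        (forall O' : (A -> Prop) -> Prop,
            is_topology O' -> balls_fundamental le nrm O' ->
            forall U, O' U <-> O U) &
        is_topological_ring O].
Proof.
move=> [[lerefl leanti letrans _ _] _ letot lt01] [n0 n1 _ _] [T1 T2 T3 T4].
set pos := fun a => lt_of le 0 (nrm a).
set B := ball_of le nrm.
have shift : forall x a z, B x a z = B 0 a (z - x).
  by move=> x a z; rewrite /B /ball_of subr0.
have B00 : forall c, pos c -> B 0 c 0.
  by move=> c pc; rewrite /B /ball_of subr0 n0.
have ltle : forall u v w, lt_of le u v -> le v w -> lt_of le u w.
  move=> u v w [uv nuv] vw; split; first exact: letrans vw.
  by move=> E; subst w; apply: nuv; apply: leanti.
have minb : forall a b, pos a -> pos b -> exists c, [/\ pos c,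
    (forall z, B 0 c z -> B 0 a z) & (forall z, B 0 c z -> B 0 b z)].
  move=> a b pa pb; case: (letot (nrm a) (nrm b)) => H.
    exists a; split=> // z; rewrite /B /ball_of => h; exact: ltle h H.
  exists b; split=> // z; rewrite /B /ball_of => h; exact: ltle h H.
set O := fun U : A -> Prop => forall x, U x ->
  exists a, pos a /\ forall z, B x a z -> U z.
have nbhdB : forall x a, pos a -> is_nbhd O x (B x a).
  move=> x a pa.
  exists (fun y => exists c, pos c /\ forall z, B y c z -> B x a z); split.
  - move=> y [c [pc Hc]].
    have [c' [pc' Hc']] := T1 c pc.
    exists c'; split=> // w Hw; exists c'; split=> // z Hz.
    apply: Hc; rewrite shift.
    have -> : z - y = (z - w) + (w - y) by ring.
    by apply: Hc'; [move: Hz | move: Hw]; rewrite shift.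
  - by exists a.
  - move=> y [c [pc Hc]]; apply: Hc; rewrite shift subrr; exact: B00.
have nbhdE : forall p W, is_nbhd O p W ->
    exists a, pos a /\ forall z, B p a z -> W z.
  move=> p W [U [OU Up UW]]; have [a [pa Ha]] := OU p Up.
  by exists a; split=> // z /Ha /UW.
have pos1 : pos 1 by rewrite /pos n1.
exists O; split.
- split.
  + by move=> x _; exists 1; split.
  + move=> U V OU OV x [Ux Vx].
    have [a [pa Ha]] := OU x Ux; have [b [pb Hb]] := OV x Vx.
    have [c [pc Hca Hcb]] := minb a b pa pb.
    exists c; split=> // z; rewrite shift => h; split.
    * by apply: Ha; rewrite shift; apply: Hca.
    * by apply: Hb; rewrite shift; apply: Hcb.
  + move=> F HF x [U [FU Ux]]; have [a [pa Ha]] := HF U FU x Ux.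
    by exists a; split=> // z /Ha Uz; exists U.
- move=> x; split.
  + by move=> N [a [pa ->]]; exact: nbhdB.
  + move=> N /nbhdE [a [pa Ha]]; exists (B x a); split=> //; by exists a.
- move=> O' [_ _ Ounion] Hf U; split.
  + move=> O'U x Ux.
    have [_ H2] := Hf x.
    have [M [[a [pa ->]] HM]] : exists M, (exists a, pos a /\ M = B x a) /\
        forall y, M y -> U y.
      apply: H2; by exists U; split.
    by exists a.
  + move=> OU.
    have HU := Ounion (fun V => O' V /\ forall y, V y -> U y) (fun V H => proj1 H).
    suff <- : (fun x => exists V, (O' V /\ forall y, V y -> U y) /\ V x) = U by [].
    apply: functional_extensionality => x; apply: propositional_extensionality.
    split; first by move=> [V [[_ HV] Vx]]; exact: HV.
    move=> Ux; have [a [pa Ha]] := OU x Ux.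
    have [H1 _] := Hf x.
    have [V [O'V Vx VB]] := H1 (B x a) (ex_intro _ a (conj pa erefl)).
    exists V; split=> //; split=> // y /VB; exact: Ha.
- split.
  +
    split.
    * by move=> x _; exists 1; split.
    * move=> U V OU OV x [Ux Vx].
      have [a [pa Ha]] := OU x Ux; have [b [pb Hb]] := OV x Vx.
      have [c [pc Hca Hcb]] := minb a b pa pb.
      exists c; split=> // z; rewrite shift => h; split.
      -- by apply: Ha; rewrite shift; apply: Hca.
      -- by apply: Hb; rewrite shift; apply: Hcb.
    * move=> F HF x [U [FU Ux]]; have [a [pa Ha]] := HF U FU x Ux.
      by exists a; split=> // z /Ha Uz; exists U.
  + move=> x y W /nbhdE [a [pa Ha]].
    have [a' [pa' Ha']] := T1 a pa.
    exists (B x a'), (B y a'); split; [exact: nbhdB | exact: nbhdB |].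
    move=> u v; rewrite (shift x) (shift y) => hu hv; apply: Ha; rewrite shift.
    have -> : u + v - (x + y) = (u - x) + (v - y) by ring.
    exact: Ha'.
  + move=> x W /nbhdE [a [pa Ha]].
    have [a' [pa' Ha']] := T4 a pa.
    exists (B x a'); split; first exact: nbhdB.
    move=> u; rewrite shift => hu; apply: Ha; rewrite shift.
    have -> : - u - - x = - (u - x) by ring.
    exact: Ha'.
  + move=> x y W /nbhdE [a [pa Ha]].
    have [a1 [pa1 Ha1]] := T1 a pa.
    have [a2 [pa2 Ha2]] := T1 a1 pa1.
    have [a3 [pa3 Ha3]] := T3 a2 pa2.
    have [c [pc Hc]] := T2 a2 pa2 x.
    have [d [pd Hd]] := T2 a2 pa2 y.
    have [e [pe He3 Hed]] := minb a3 d pa3 pd.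
    have [f [pf Hf3 Hfc]] := minb a3 c pa3 pc.
    exists (B x e), (B y f); split; [exact: nbhdB | exact: nbhdB |].
    move=> u v; rewrite (shift x) (shift y) => hu hv; apply: Ha; rewrite shift.
    have -> : u * v - x * y = ((u - x) * (v - y) + x * (v - y)) + y * (u - x)
      by ring.
    apply: Ha1; first by apply: Ha2; [apply: Ha3; [exact: He3|exact: Hf3] | apply: Hc; exact: Hfc].
    have -> : y * (u - x) = y * (u - x) + 0 by rewrite addr0.
    apply: Ha2; [apply: Hd; exact: Hed | exact: B00].
Qed.
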